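(* Let $\{(\mathbf{x}^k,\mathbf{r}^k,\boldsymbol{\lambda}^k)\}$ be generated by Algorithm 1. If $0<\rho\le\frac{\beta}{m}$ and $\mathbf{P}_i\succeq L_i\mathbf{I}+\beta\mathbf{A}_i^\top\mathbf{A}_i$ for all $i=1,\ldots,m$, then $F(\mathbf{x}^k)\to F(\mathbf{x}^* )$ in probability and $\|\mathbf{r}^k\|\to0$ in probability, where $\mathbf{x}^*$ is as in the solution-existence assumption.
   Context: Problem: $\min_{\mathbf{x}} F(\mathbf{x}):=f(\mathbf{x})+g(\mathbf{x})$ s.t. $\mathbf{A}\mathbf{x}=\mathbf{b}$, where $\mathbf{x}=(\mathbf{x}_1;\ldots;\mathbf{x}_m)$ with blocks $\mathbf{x}_i\in\mathbb{R}^{n_i}$, $g(\mathbf{x})=\sum_{i=1}^m g_i(\mathbf{x}_i)$, $\mathbf{A}=[\mathbf{A}_1,\ldots,\mathbf{A}_m]$ with $\mathbf{A}_i\in\mathbb{R}^{q\times n_i}$, $\mathbf{b}\in\mathbb{R}^q$; $f$ is convex and continuously differentiable, each $g_i$ is proper, convex, lower semicontinuous. Define $\Phi(\bar{\mathbf{x}},\mathbf{x},\boldsymbol{\lambda})=F(\bar{\mathbf{x}})-F(\mathbf{x})-\langle\boldsymbol{\lambda},\mathbf{A}\bar{\mathbf{x}}-\mathbf{b}\rangle$. $\mathbf{U}_i\mathbf{y}$ denotes the vector whose $i$-th block is $\mathbf{y}_i$ and other blocks zero. Assumption (existence of a solution): there is $(\mathbf{x}^*,\boldsymbol{\lambda}^*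 )$ with $\mathbf{A}\mathbf{x}^*=\mathbf{b}$ and $\Phi(\mathbf{x},\mathbf{x}^*,\boldsymbol{\lambda}^* )\ge0$ for all $\mathbf{x}$. Assumption (gradient Lipschitz continuity): there are constants $L_i>0$ and $L_r$ with $\|\nabla_i f(\mathbf{x}+\mathbf{U}_i\mathbf{y})-\nabla_i f(\mathbf{x})\|\le L_i\|\mathbf{y}_i\|$ and $\|\nabla f(\mathbf{x}+\mathbf{U}_i\mathbf{y})-\nabla f(\mathbf{x})\|\le L_r\|\mathbf{y}_i\|$ for all $i,\mathbf{x},\mathbf{y}$. Algorithm 1 (randomized primal-dual block update): choose $\mathbf{x}^0$, set $\boldsymbol{\lambda}^0=\mathbf{0}$, $\mathbf{r}^0=\mathbf{A}\mathbf{x}^0-\mathbf{b}$, parameters $\beta>0,\rho>0$, symmetric PSD matrices $\mathbf{P}_i$. For $k=0,1,\ldots$: pick $i_k\in\{1,\ldots,m\}$ uniformly at random, independent of $i_0,\ldots,i_{k-1}$; set $\mathbf{x}_i^{k+1}=\mathbf{x}_i^k$ for $i\ne i_k$ and $$\mathbf{x}_{i_k}^{k+1}\in\arg\min_{\mathbf{x}_{i_k}}\big\langle\nabla_{i_k} f(\mathbf{x}^k)-\mathbf{A}_{i_k}^\top(\boldsymbol{\lambda}^k-\beta\mathbf{r}^k),\mathbf{x}_{i_k}\big\rangle+g_{i_k}(\mathbf{x}_{i_k})+\tfrac12\|\mathbf{x}_{i_k}-\mathbf{x}_{i_k}^k\|_{\mathbf{P}_{i_k}}^2$$ (with $\|\mathbf{z}\|_{\mathbf{M}}^2=\mathbf{z}^\top\mathbf{M}\mathbf{z}$);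 then $\mathbf{r}^{k+1}=\mathbf{r}^k+\mathbf{A}_{i_k}(\mathbf{x}_{i_k}^{k+1}-\mathbf{x}_{i_k}^k)$ (so $\mathbf{r}^k=\mathbf{A}\mathbf{x}^k-\mathbf{b}$) and $\boldsymbol{\lambda}^{k+1}=\boldsymbol{\lambda}^k-\rho\mathbf{r}^{k+1}$. *)

(* Defs.v *)
From mathcomp Require Import all_boot.
From Stdlib Require Import Reals ClassicalEpsilon.
Set Implicit Arguments. Unset Strict Implicit. Unset Printing Implicit Defensive.
Open Scope R_scope.

Definition Vec (N : nat) := 'I_N -> R.

Definition sumR (N : nat) (F : 'I_N -> R) : R := \big[Rplus/0]_(j < N) F j.
Definition sumB (N m : nat) (blk : 'I_N -> 'I_m) (i : 'I_m) (F : 'I_N -> R) : R :=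
  \big[Rplus/0]_(j < N | blk j == i) F j.

Definition dot (N : nat) (u v : Vec N) : R := sumR (fun j => u j * v j).
Definition norm (N : nat) (u : Vec N) : R := sqrt (dot u u).
Definition vsub (N : nat) (u v : Vec N) : Vec N := fun j => u j - v j.
Definition vcomb (N : nat) (t : R) (u v : Vec N) : Vec N :=
  fun j => t * u j + (1 - t) * v j.

Definition bdot (N m : nat) (blk : 'I_N -> 'I_m) (i : 'I_m) (u v : Vec N) : R :=
  sumB blk i (fun j => u j * v j).
Definition bnorm (N m : nat) (blk : 'I_N -> 'I_m) (i : 'I_m) (u : Vec N) : R :=
  sqrt (bdot blk i u u).
Definition Ublk (N m : nat) (blk : 'I_N -> 'I_m) (i : 'I_m) (y : Vec N) : Vec N :=
  fun j => if blk j == i then y j else 0.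
Definition vadd (N : nat) (u v : Vec N) : Vec N := fun j => u j + v j.

(* Matrices: A : 'I_q -> 'I_N -> R (q x N), A = [A_1,...,A_m] column blocks. *)
Definition mulv (q N : nat) (A : 'I_q -> 'I_N -> R) (x : Vec N) : Vec q :=
  fun r => sumR (fun j => A r j * x j).
Definition tmulv (q N : nat) (A : 'I_q -> 'I_N -> R) (v : Vec q) : Vec N :=
  fun j => sumR (fun r => A r j * v r).
Definition bmulv (q N m : nat) (blk : 'I_N -> 'I_m) (i : 'I_m)
  (A : 'I_q -> 'I_N -> R) (y : Vec N) : Vec q :=
  fun r => sumB blk i (fun j => A r j * y j).
(* ||z_i||^2_{P_i} with P_i the block-i principal submatrix of P *)
Definition bquad (N m : nat) (blk : 'I_N -> 'I_m) (i : 'I_m)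
  (P : 'I_N -> 'I_N -> R) (z : Vec N) : R :=
  sumB blk i (fun j => sumB blk i (fun l => z j * P j l * z l)).

(* ---- extended reals (-oo excluded): None = +oo ---- *)
Definition ER := option R.
Definition eplus (a b : ER) : ER :=
  match a, b with Some x, Some y => Some (x + y) | _, _ => None end.

Definition proper_fun (N : nat) (h : Vec N -> ER) : Prop := exists v, h v <> None.
Definition convex_efun (N : nat) (h : Vec N -> ER) : Prop :=
  forall u v a c t, h u = Some a -> h v = Some c -> 0 <= t <= 1 ->
    exists d, h (vcomb t u v) = Some d /\ d <= t * a + (1 - t) * c.
Definition lsc_efun (N : nat) (h : Vec N -> ER) : Prop :=
  forall v (s : R), match h v with None => True | Some a => s < a end ->
    exists delta, 0 < delta /\ forall w, norm (vsub w v) < delta ->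
      match h w with None => True | Some c => s < c end.

Definition convex_fun (N : nat) (f : Vec N -> R) : Prop :=
  forall u v t, 0 <= t <= 1 -> f (vcomb t u v) <= t * f u + (1 - t) * f v.
Definition has_gradient (N : nat) (f : Vec N -> R) (gradf : Vec N -> Vec N) : Prop :=
  forall x eps, 0 < eps -> exists delta, 0 < delta /\ forall y,
    norm (vsub y x) < delta ->
    Rabs (f y - f x - dot (gradf x) (vsub y x)) <= eps * norm (vsub y x).
Definition continuous_map (N M : nat) (G : Vec N -> Vec M) : Prop :=
  forall x eps, 0 < eps -> exists delta, 0 < delta /\ forall y,
    norm (vsub y x) < delta -> norm (vsub (G y) (G x)) < eps.

Definition block_fun (N m : nat) (blk : 'I_N -> 'I_m) (i : 'I_m) (h : Vec N -> ER) :=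
  forall x y, (forall j, blk j = i -> x j = y j) -> h x = h y.

Definition Fobj (N m : nat) (f : Vec N -> R) (g : 'I_m -> Vec N -> ER) (x : Vec N) : ER :=
  eplus (Some (f x)) (\big[eplus/Some 0]_(i < m) g i x).

Definition resid (q N : nat) (A : 'I_q -> 'I_N -> R) (b : Vec q) (x : Vec N) : Vec q :=
  fun r => mulv A x r - b r.

(* Probability of an event depending on the first k indices i_0..i_{k-1},
   which are i.i.d. uniform on 'I_m: uniform measure on k.-tuple 'I_m. *)
Definition prob (m k : nat) (E : k.-tuple 'I_m -> Prop) : R :=
  (\big[Rplus/0]_(t : k.-tuple 'I_m)
     (if excluded_middle_informative (E t) then 1 else 0)) / (INR m ^ k).

(* Algorithm 1, with iterates indexed by the history (i_0,...,i_{k-1}). *)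
Definition algorithm1 (N m q : nat) (blk : 'I_N -> 'I_m)
  (f : Vec N -> R) (gradf : Vec N -> Vec N) (g : 'I_m -> Vec N -> ER)
  (A : 'I_q -> 'I_N -> R) (b : Vec q) (beta rho : R)
  (P : 'I_m -> 'I_N -> 'I_N -> R)
  (x : forall k, k.-tuple 'I_m -> Vec N) (lam : forall k, k.-tuple 'I_m -> Vec q) : Prop :=
  (forall t : tuple_of 0%nat 'I_m, lam 0%nat t = fun _ => 0) /\
  forall (k : nat) (t : k.-tuple 'I_m) (i : 'I_m),
    let xk := x k t in
    let x' := x k.+1 [tuple of rcons t i] in
    let c := vsub (gradf xk) (tmulv A (vsub (lam k t)
                   (fun r => beta * resid A b xk r))) in
    let Psi z gz := bdot blk i c z + gz + / 2 * bquad blk i (P i) (vsub z xk) in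
    (forall j, blk j <> i -> x' j = xk j) /\
    (exists a, g i x' = Some a /\
       forall z gz, (forall j, blk j <> i -> z j = xk j) -> g i z = Some gz ->
         Psi x' a <= Psi z gz) /\
    lam k.+1 [tuple of rcons t i] = (fun r => lam k t r - rho * resid A b x' r).

(* Main.v *)
From HB Require Import structures.
Require Import Defs.
From mathcomp Require Import all_boot.
From Stdlib Require Import Reals Lra Psatz ClassicalEpsilon FunctionalExtensionality.
Open Scope R_scope.

Lemma Rplus_assoc' : associative Rplus. Proof. move=> *; ring. Qed.
Lemma Rplus_comm' : commutative Rplus. Proof. move=> *; ring. Qed.
Lemma Rplus_0_l' : left_id 0 Rplus. Proof. move=> *; ring. Qed.
Lemma Rmult_assoc' : associative Rmult. Proof. move=> *; ring. Qed.
Lemma Rmult_comm' : commutative Rmult. Proof. move=> *; ring. Qed.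
Lemma Rmult_1_l' : left_id 1 Rmult. Proof. move=> *; ring. Qed.
HB.instance Definition _ := Monoid.isComLaw.Build R 0 Rplus Rplus_assoc' Rplus_comm' Rplus_0_l'.
HB.instance Definition _ := Monoid.isComLaw.Build R 1 Rmult Rmult_assoc' Rmult_comm' Rmult_1_l'.
HB.instance Definition _ := Monoid.isMulLaw.Build R 0 Rmult Rmult_0_l Rmult_0_r.
HB.instance Definition _ := Monoid.isAddLaw.Build R Rmult Rplus Rmult_plus_distr_r Rmult_plus_distr_l.

Section Sums.
Lemma sum_le (I : finType) (P : pred I) (F G : I -> R) :
  (forall i, P i -> F i <= G i) ->
  \big[Rplus/0]_(i | P i) F i <= \big[Rplus/0]_(i | P i) G i.
Proof.
move=> H; apply: (big_ind2 (fun a b => a <= b)) => //; first lra.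
by move=> a b c d ? ?; lra.
Qed.

Lemma sum_ge0 (I : finType) (P : pred I) (F : I -> R) :
  (forall i, P i -> 0 <= F i) -> 0 <= \big[Rplus/0]_(i | P i) F i.
Proof. by move=> H; apply: (big_ind (fun a => 0 <= a)) => //; [lra | move=> *; lra]. Qed.

Lemma sum_add (I : finType) (P : pred I) (F G : I -> R) :
  \big[Rplus/0]_(i | P i) F i + \big[Rplus/0]_(i | P i) G i =
  \big[Rplus/0]_(i | P i) (F i + G i).
Proof. by rewrite big_split. Qed.

Lemma sum_D1 (I : finType) (i : I) (F : I -> R) :
  \big[Rplus/0]_(j : I) F j = F i + \big[Rplus/0]_(j | j != i) F j.
Proof. by rewrite (bigD1 i). Qed.

Lemma sum_opp (I : finType) (P : pred I) (F : I -> R) :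
  \big[Rplus/0]_(i | P i) (- F i) = - \big[Rplus/0]_(i | P i) F i.
Proof.
have -> : - (\big[Rplus/0]_(i | P i) F i) = (-1) * (\big[Rplus/0]_(i | P i) F i) by ring.
rewrite big_distrr /=; apply: eq_bigr => i _; ring.
Qed.

Lemma sum_sub (I : finType) (P : pred I) (F G : I -> R) :
  \big[Rplus/0]_(i | P i) (F i - G i) =
  \big[Rplus/0]_(i | P i) F i - \big[Rplus/0]_(i | P i) G i.
Proof. rewrite /Rminus big_split /= sum_opp //. Qed.

Lemma sum_lin (I : finType) (P : pred I) (a b : R) (F G : I -> R) :
  a * \big[Rplus/0]_(i | P i) F i + b * \big[Rplus/0]_(i | P i) G i =
  \big[Rplus/0]_(i | P i) (a * F i + b * G i).
Proof. by rewrite big_split /= !big_distrr. Qed.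

Lemma sum_scale (I : finType) (P : pred I) (a : R) (F : I -> R) :
  \big[Rplus/0]_(i | P i) (a * F i) = a * \big[Rplus/0]_(i | P i) F i.
Proof. by rewrite big_distrr. Qed.

Lemma sum_const0 (I : finType) (P : pred I) :
  \big[Rplus/0]_(i | P i) 0 = 0.
Proof. by rewrite big1. Qed.

Lemma sum_const_ord (n : nat) (c : R) :
  \big[Rplus/0]_(i < n) c = INR n * c.
Proof.
elim: n => [|n IH]; first by rewrite big_ord0 /=; ring.
rewrite big_ord_recr IH S_INR /=; ring.
Qed.

Lemma cs_real (X a b : R) : 0 <= a -> 0 <= b ->
  (forall s, 0 < s -> 2 * X <= s * (a * a) + (b * b) / s) -> X <= a * b.
Proof.
move=> Ha Hb H.
case: (Req_dec a 0) => Ha0.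
- subst a.
  case: (Req_dec b 0) => Hb0.
  + subst b. have := H 1 Rlt_0_1. have -> : 1 * (0 * 0) + 0 * 0 / 1 = 0 by field. lra.
  + apply: Rnot_lt_le => HX.
    have Hb2 : 0 < b * b by nra.
    have Hs : 0 < (b * b) / X by apply: Rdiv_lt_0_compat; lra.
    have := H _ Hs.
    have -> : b * b / X * (0 * 0) + b * b / (b * b / X) = X by field; lra.
    lra.
- case: (Req_dec b 0) => Hb0.
  + subst b.
    apply: Rnot_lt_le => HX.
    have Ha2 : 0 < a * a by nra.
    have Hs : 0 < X / (a * a) by apply: Rdiv_lt_0_compat; lra.
    have := H _ Hs.
    have -> : X / (a * a) * (a * a) + 0 * 0 / (X / (a * a)) = X by field; lra.
    lra.
  + have Hs : 0 < b / a by apply: Rdiv_lt_0_compat; lra.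
    have := H _ Hs.
    have -> : b / a * (a * a) + b * b / (b / a) = 2 * (a * b) by field; lra.
    lra.
Qed.

Lemma sum_cs (I : finType) (P : pred I) (u v : I -> R) :
  \big[Rplus/0]_(i | P i) (u i * v i) <=
  sqrt (\big[Rplus/0]_(i | P i) (u i * u i)) * sqrt (\big[Rplus/0]_(i | P i) (v i * v i)).
Proof.
have Hu : 0 <= \big[Rplus/0]_(i | P i) (u i * u i) by apply: sum_ge0 => i _; nra.
have Hv : 0 <= \big[Rplus/0]_(i | P i) (v i * v i) by apply: sum_ge0 => i _; nra.
apply: cs_real; try apply: sqrt_pos.
move=> s Hs. rewrite !sqrt_sqrt //.
rewrite /Rdiv (Rmult_comm _ (/ s)) -!sum_scale -big_split /=.
apply: sum_le => i _.
have Hsi : 0 < / s by apply: Rinv_0_lt_compat.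
have : 0 <= / s * (s * u i - v i) * (s * u i - v i).
  rewrite Rmult_assoc; apply: Rmult_le_pos; [lra | apply: Rle_0_sqr].

have -> : / s * (s * u i - v i) * (s * u i - v i) = s * (u i * u i) - 2 * (u i * v i) + / s * (v i * v i).
  field; lra.
lra.
Qed.
End Sums.

Lemma tuple_rcons_ex (T : Type) k (u : k.+1.-tuple T) :
  exists (t : k.-tuple T) (i : T), u = [tuple of rcons t i].
Proof.
have Hs : size (belast (thead u) (behead u)) == k.
  by rewrite size_belast size_behead size_tuple.
exists (Tuple Hs), (last (thead u) (behead u)).
apply: val_inj => /=. rewrite -lastI.
clear Hs; case: u => [[|a s] Hu] //=.
Qed.

Lemma sum_rcons (T : finType) k (h : k.+1.-tuple T -> R) :
  \big[Rplus/0]_(u : k.+1.-tuple T) h u =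
  \big[Rplus/0]_(t : k.-tuple T) \big[Rplus/0]_(i : T) h [tuple of rcons t i].
Proof.
rewrite pair_big /=.
pose phi := fun p : k.-tuple T * T => [tuple of rcons p.1 p.2].
have Hs : forall u : k.+1.-tuple T, size (belast (thead u) (behead u)) == k.
  by move=> u; rewrite size_belast size_behead size_tuple.
pose psi := fun u : k.+1.-tuple T => (Tuple (Hs u), last (thead u) (behead u)).
rewrite (reindex phi) //=.
exists psi.
- move=> [t i] _. rewrite /psi /phi /=.
  congr pair; last first.
  + case: t => [[|a s] Ht] //=. by rewrite last_rcons.
  + apply: val_inj => /=. case: t => [[|a s] Ht] //=. by rewrite belast_rcons.
- move=> u _. rewrite /psi /phi /=. apply: val_inj => /=. rewrite -lastI.
  by case: u => [[|a s] Hu].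
Qed.

Set Implicit Arguments. Unset Strict Implicit.

Section Vec.
Variables (N m : nat) (blk : 'I_N -> 'I_m).

Lemma sumR_blocks (F : 'I_N -> R) :
  sumR F = \big[Rplus/0]_(i < m) sumB blk i F.
Proof.
rewrite /sumR /sumB (partition_big blk (fun _ => true)) //.
Qed.

Lemma sumR_off (i : 'I_m) (F : 'I_N -> R) :
  (forall j, blk j <> i -> F j = 0) -> sumR F = sumB blk i F.
Proof.
move=> H; rewrite /sumR /sumB [RHS]big_mkcond /=.
apply: eq_bigr => j _. case: eqP => // /H ->. done.
Qed.

Lemma sumB_ext (i : 'I_m) (F G : 'I_N -> R) :
  (forall j, blk j = i -> F j = G j) -> sumB blk i F = sumB blk i G.
Proof. by move=> H; apply: eq_bigr => j /eqP /H. Qed.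

Lemma sumB_le (i : 'I_m) (F G : 'I_N -> R) :
  (forall j, blk j = i -> F j <= G j) -> sumB blk i F <= sumB blk i G.
Proof. by move=> H; apply: sum_le => j /eqP /H. Qed.

Lemma sumB_lin (i : 'I_m) a b (F G : 'I_N -> R) :
  a * sumB blk i F + b * sumB blk i G = sumB blk i (fun j => a * F j + b * G j).
Proof. by rewrite /sumB sum_lin. Qed.

Lemma sumR_lin a b (F G : 'I_N -> R) :
  a * sumR F + b * sumR G = sumR (fun j => a * F j + b * G j).
Proof. by rewrite /sumR sum_lin. Qed.

Lemma sumR_ext (F G : 'I_N -> R) : (forall j, F j = G j) -> sumR F = sumR G.
Proof. by move=> H; apply: eq_bigr => j _. Qed.

Lemma sumR_le (F G : 'I_N -> R) : (forall j, F j <= G j) -> sumR F <= sumR G.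
Proof. by move=> H; apply: sum_le => j _. Qed.

Lemma bdot_cs (i : 'I_m) u v : bdot blk i u v <= bnorm blk i u * bnorm blk i v.
Proof. exact: sum_cs. Qed.

Lemma bdot_ge0 (i : 'I_m) u : 0 <= bdot blk i u u.
Proof. by apply: sum_ge0 => j _; nra. Qed.

Lemma dot_ge0 (u : Vec N) : 0 <= dot u u.
Proof. by apply: sum_ge0 => j _; nra. Qed.

End Vec.

Lemma norm_scale N (h : R) (d : Vec N) : norm (fun j => h * d j) = Rabs h * norm d.
Proof.
rewrite /norm /dot /sumR.
have -> : \big[Rplus/0]_(j < N) (h * d j * (h * d j)) = (h * h) * \big[Rplus/0]_(j < N) (d j * d j).
  by rewrite -sum_scale; apply: eq_bigr => j _; ring.
rewrite sqrt_mult; first by have := sqrt_Rsqr_abs h; rewrite /Rsqr => ->.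
- nra.
- by apply: sum_ge0 => j _; nra.
Qed.

Lemma derivable_eq (f : R -> R) x l l' : l = l' -> derivable_pt_lim f x l -> derivable_pt_lim f x l'.
Proof. by move=> ->. Qed.

Lemma deriv_line N (f : Vec N -> R) gradf (x d : Vec N) (s : R) :
  has_gradient f gradf ->
  derivable_pt_lim (fun s => f (fun j => x j + s * d j)) s
     (dot (gradf (fun j => x j + s * d j)) d).
Proof.
move=> Hg eps Heps.
set y := (fun j => x j + s * d j).
have Hnd := sqrt_pos (dot d d).
have Hn1 : 0 < norm d + 1 by rewrite /norm; lra.
have Heps' : 0 < eps / (2 * (norm d + 1)) by apply: Rdiv_lt_0_compat; lra.
have [delta [Hdel Hy]] := Hg y _ Heps'.
have Hdp : 0 < delta / (norm d + 1) by apply: Rdiv_lt_0_compat.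
exists (mkposreal _ Hdp) => h Hh0 Hh /=.
have Evs : vsub (fun j => x j + (s + h) * d j) y = (fun j => h * d j).
  by apply: functional_extensionality => j; rewrite /vsub /y; ring.
have Hnv : norm (vsub (fun j => x j + (s + h) * d j) y) = Rabs h * norm d.
  by rewrite Evs norm_scale.
have Habs := Rabs_pos h.
have Hlt : norm (vsub (fun j => x j + (s + h) * d j) y) < delta.
  rewrite Hnv.
  have : Rabs h * (norm d + 1) < delta.
    have := Rmult_lt_compat_r (norm d + 1) _ _ Hn1 Hh.
    have -> : delta / (norm d + 1) * (norm d + 1) = delta by field; lra.
    done.
  rewrite /norm in Hnd *; nra.
have H1 := Hy _ Hlt.
rewrite Evs in H1.
have Edot : dot (gradf y) (fun j => h * d j) = h * dot (gradf y) d.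
  rewrite /dot /sumR -sum_scale; apply: eq_bigr => j _; ring.
rewrite Edot norm_scale in H1.
have -> : (f (fun j => x j + (s + h) * d j) - f y) / h - dot (gradf y) d =
          (f (fun j => x j + (s + h) * d j) - f y - h * dot (gradf y) d) / h.
  by field.
rewrite /Rdiv Rabs_mult Rabs_inv.
have Hh' : 0 < Rabs h by apply: Rabs_pos_lt.
apply: (Rle_lt_trans _ (eps / (2 * (norm d + 1)) * norm d)).
- apply: (Rmult_le_reg_r (Rabs h)) => //.
  rewrite Rmult_assoc Rinv_l; last lra.
  rewrite Rmult_1_r. rewrite /norm in H1 *. nra.
- have : eps / (2 * (norm d + 1)) * norm d <= eps / 2.
    have -> : eps / 2 = eps / (2 * (norm d + 1)) * (norm d + 1) by field; lra.
    apply: Rmult_le_compat_l; lra.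
  lra.
Qed.

Lemma deriv_poly (D K c : R) :
  derivable_pt_lim (fun s => s * D + K * (s * s)) c (D + 2 * K * c).
Proof.
move=> eps Heps.
have Hp : 0 < eps / (Rabs K + 1) by apply: Rdiv_lt_0_compat; have := Rabs_pos K; lra.
exists (mkposreal _ Hp) => h Hh0 Hh /=.
have -> : ((c + h) * D + K * ((c + h) * (c + h)) - (c * D + K * (c * c))) / h - (D + 2 * K * c) = K * h.
  by field.
rewrite Rabs_mult.
have HK := Rabs_pos K.
have := Rmult_le_compat_l (Rabs K) _ _ HK (Rlt_le _ _ Hh).
have : Rabs K * (eps / (Rabs K + 1)) < eps.
  have -> : Rabs K * (eps / (Rabs K + 1)) = eps * (Rabs K / (Rabs K + 1)) by field; lra.
  have : Rabs K / (Rabs K + 1) < 1.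
    apply: (Rmult_lt_reg_r (Rabs K + 1)); first lra.
    have -> : Rabs K / (Rabs K + 1) * (Rabs K + 1) = Rabs K by field; lra.
    lra.
  nra.
move=> H1 H2; simpl in H2; lra.
Qed.

Lemma descent N m (blk : 'I_N -> 'I_m) (f : Vec N -> R) gradf (Li : R) (i : 'I_m) (x x' : Vec N) :
  has_gradient f gradf -> 0 <= Li ->
  (forall z y, bnorm blk i (vsub (gradf (vadd z (Ublk blk i y))) (gradf z)) <= Li * bnorm blk i y) ->
  (forall j, blk j <> i -> x' j = x j) ->
  f x' <= f x + bdot blk i (gradf x) (vsub x' x) + Li / 2 * bdot blk i (vsub x' x) (vsub x' x).
Proof.
move=> Hg HL Hlip Hoff.
set d := vsub x' x.
have Hd0 : forall j, blk j <> i -> d j = 0 by move=> j /Hoff; rewrite /d /vsub => ->; ring.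
set B := bdot blk i d d.
set D0 := bdot blk i (gradf x) d.
set phi := fun s => f (fun j => x j + s * d j).
set psi := fun s => phi s - (s * D0 + (Li / 2 * B) * (s * s)).
have Hpsi : forall c, 0 <= c <= 1 -> derivable_pt_lim psi c
     (dot (gradf (fun j => x j + c * d j)) d - (D0 + 2 * (Li / 2 * B) * c)).
  move=> c _. apply: (derivable_pt_lim_minus phi (fun s => s * D0 + (Li / 2 * B) * (s * s))).
  + exact: deriv_line.
  + exact: deriv_poly.
have [c [Hc Hcr]] := MVT_cor2 psi _ 0 1 Rlt_0_1 Hpsi.
have Hph0 : phi 0 = f x by rewrite /phi; congr f; apply: functional_extensionality => j; ring.
have Hph1 : phi 1 = f x' by rewrite /phi; congr f; apply: functional_extensionality => j; rewrite /d /vsub; ring.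
set yc := fun j => x j + c * d j.
have Eyc : yc = vadd x (Ublk blk i (fun j => c * d j)).
  apply: functional_extensionality => j; rewrite /yc /vadd /Ublk.
  case: eqP => [//|/Hd0 ->]; ring.
have Edot : dot (gradf yc) d - dot (gradf x) d = bdot blk i (vsub (gradf yc) (gradf x)) d.
  rewrite /dot.
  have -> : sumR (fun j => gradf yc j * d j) - sumR (fun j => gradf x j * d j) =
            sumR (fun j => vsub (gradf yc) (gradf x) j * d j).
    rewrite /sumR -sum_sub; apply: eq_bigr => j _; rewrite /vsub; ring.
  apply: sumR_off => j /Hd0 ->; ring.
have ED0 : D0 = dot (gradf x) d.
  rewrite /D0 /bdot /dot; symmetry; apply: sumR_off => j /Hd0 ->; ring.
have HB0 : 0 <= B by apply: bdot_ge0.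
have Hbn : bnorm blk i (fun j => c * d j) = c * bnorm blk i d.
  rewrite /bnorm /bdot /sumB.
  have -> : \big[Rplus/0]_(j < N | blk j == i) (c * d j * (c * d j)) = (c * c) * \big[Rplus/0]_(j < N | blk j == i) (d j * d j).
    by rewrite -sum_scale; apply: eq_bigr => j _; ring.
  rewrite sqrt_mult; [rewrite sqrt_square; lra| nra | by apply: sum_ge0 => j _; nra].
have Hbd : bnorm blk i d * bnorm blk i d = B by rewrite /bnorm sqrt_sqrt.
have Hder : dot (gradf yc) d - (D0 + 2 * (Li / 2 * B) * c) <= 0.
  have H1 := bdot_cs blk i (vsub (gradf yc) (gradf x)) d.
  have H2 := Hlip x (fun j => c * d j).
  rewrite -Eyc Hbn in H2.
  have Hbnp : 0 <= bnorm blk i d by apply: sqrt_pos.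
  have H3 := Rmult_le_compat_r _ _ _ Hbnp H2.
  rewrite ED0. rewrite -ED0 in Edot.
  have : dot (gradf yc) d - D0 <= Li * c * B.
    rewrite Edot -Hbd. nra.
  lra.
have : psi 1 - psi 0 <= 0.
  rewrite Hc. have -> : 1 - 0 = 1 by ring. rewrite Rmult_1_r.
  rewrite /yc in Hder. exact: Hder.
rewrite /psi Hph0 Hph1. rewrite /D0 /B. lra.
Qed.

Lemma conv_grad N (f : Vec N -> R) gradf (x y : Vec N) :
  convex_fun f -> has_gradient f gradf ->
  dot (gradf x) (vsub y x) <= f y - f x.
Proof.
move=> Hc Hg.
set d := vsub y x.
have Hd := deriv_line x d 0 Hg.
have E0 : (fun j => x j + 0 * d j) = x by apply: functional_extensionality => j; ring.
rewrite E0 in Hd.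
apply: Rnot_lt_le => Hlt.
set e := dot (gradf x) d - (f y - f x).
have He : 0 < e by rewrite /e; lra.
have [delta Hdel] := Hd e He.
set h := Rmin (delta / 2) 1.
have Hdp := cond_pos delta.
have Hh0 : 0 < h by apply: Rmin_pos; lra.
have Hh1 : h <= 1 by apply: Rmin_r.
have Hhd : h < delta by have := Rmin_l (delta / 2) 1; rewrite -/h; lra.
have Hab : Rabs h < delta by rewrite Rabs_pos_eq; lra.
have := Hdel h (Rgt_not_eq _ _ Hh0) Hab.
have Ecomb : (fun j => x j + (0 + h) * d j) = vcomb h y x.
  by apply: functional_extensionality => j; rewrite /vcomb /d /vsub; ring.
rewrite Ecomb.
have Hcv := Hc y x h (ltac:(lra)).
move=> Habs.
have := Rabs_def2 _ _ Habs. move=> [_ Hlo].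
have : (f (vcomb h y x) - f x) / h <= f y - f x.
  apply: (Rmult_le_reg_r h) => //.
  have -> : (f (vcomb h y x) - f x) / h * h = f (vcomb h y x) - f x by field; lra.
  nra.
rewrite E0 /e in Hlo => Hq; lra.
Qed.

Set Implicit Arguments. Unset Strict Implicit.

Section TP.
Variables (N m : nat) (blk : 'I_N -> 'I_m).

Lemma sumB_lin3 (i : 'I_m) a b c (F G H : 'I_N -> R) :
  a * sumB blk i F + b * sumB blk i G + c * sumB blk i H =
  sumB blk i (fun j => a * F j + b * G j + c * H j).
Proof. by rewrite /sumB -!sum_scale -!big_split. Qed.

Lemma bquad_comb (i : 'I_m) P t (u v : Vec N) :
  bquad blk i P (fun j => t * u j + (1 - t) * v j) =
  t * bquad blk i P u + (1 - t) * bquad blk i P v - t * (1 - t) * bquad blk i P (vsub u v).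
Proof.
rewrite /bquad.
have -> : forall X Y Z : R, t * X + (1 - t) * Y - t * (1 - t) * Z = t * X + (1 - t) * Y + (- (t * (1 - t))) * Z
  by move=> *; ring.
rewrite sumB_lin3. apply: sumB_ext => j _.
rewrite sumB_lin3. apply: sumB_ext => l _. rewrite /vsub; ring.
Qed.

Lemma bdot_comb (i : 'I_m) (c u v : Vec N) t :
  bdot blk i c (fun j => t * u j + (1 - t) * v j) = t * bdot blk i c u + (1 - t) * bdot blk i c v.
Proof. rewrite /bdot sumB_lin; apply: sumB_ext => j _; ring. Qed.

Lemma three_point (g : Vec N -> ER) (i : 'I_m) (P : 'I_N -> 'I_N -> R) (c xk x' z : Vec N) a gz :
  convex_efun g ->
  (forall j, blk j <> i -> x' j = xk j) ->
  g x' = Some a ->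
  (forall w gw, (forall j, blk j <> i -> w j = xk j) -> g w = Some gw ->
     bdot blk i c x' + a + / 2 * bquad blk i P (vsub x' xk) <=
     bdot blk i c w + gw + / 2 * bquad blk i P (vsub w xk)) ->
  (forall j, blk j <> i -> z j = xk j) -> g z = Some gz ->
  / 2 * bquad blk i P (vsub z x') <=
  (bdot blk i c z + gz + / 2 * bquad blk i P (vsub z xk)) -
  (bdot blk i c x' + a + / 2 * bquad blk i P (vsub x' xk)).
Proof.
move=> Hcv Hx' Ha Hmin Hz Hgz.
set Q := bquad blk i P (vsub z x').
set Dv := (bdot blk i c z + gz + / 2 * bquad blk i P (vsub z xk)) -
  (bdot blk i c x' + a + / 2 * bquad blk i P (vsub x' xk)).
have key : forall t, 0 < t < 1 -> / 2 * (1 - t) * Q <= Dv.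
  move=> t Ht.
  have [dd [Hdd Hle]] := Hcv z x' gz a t Hgz Ha (ltac:(lra)).
  have Hw : forall j, blk j <> i -> vcomb t z x' j = xk j.
    by move=> j Hj; rewrite /vcomb (Hz _ Hj) (Hx' _ Hj); ring.
  have H1 := Hmin _ _ Hw Hdd.
  have Ev : vsub (vcomb t z x') xk = (fun j => t * vsub z xk j + (1 - t) * vsub x' xk j).
    by apply: functional_extensionality => j; rewrite /vsub /vcomb; ring.
  have Evv : vsub (vsub z xk) (vsub x' xk) = vsub z x'.
    by apply: functional_extensionality => j; rewrite /vsub; ring.
  rewrite Ev bquad_comb Evv /vcomb bdot_comb in H1.
  rewrite -/Q in H1.
  have : t * (/ 2 * (1 - t) * Q) <= t * Dv.
    rewrite /Dv. nra.
  move=> H2. apply: (Rmult_le_reg_l t); lra.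
case: (Rle_dec Q 0) => HQ.
- have := key (/2) (ltac:(lra)). nra.
- apply: Rnot_lt_le => Hlt.
  have HQp : 0 < Q by lra.
  set e := / 2 * Q - Dv.
  have He : 0 < e by rewrite /e; lra.
  set t := Rmin (/ 2) (e / Q).
  have Ht0 : 0 < t by apply: Rmin_pos; [lra | apply: Rdiv_lt_0_compat].
  have Ht1 : t <= / 2 by apply: Rmin_l.
  have Ht2 : t <= e / Q by apply: Rmin_r.
  have := key t (ltac:(lra)).
  have : t * Q <= e.
    have := Rmult_le_compat_r Q _ _ (Rlt_le _ _ HQp) Ht2.
    have -> : e / Q * Q = e by field; lra.
    done.
  rewrite /e; move=> H1 H2; nra.
Qed.

End TP.

Set Implicit Arguments. Unset Strict Implicit.

Lemma qident q (mu lam r e s : Vec q) (beta rho cc : R) :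
  dot (vsub mu (fun k => beta * r k)) (fun k => e k + s k) - beta / 2 * dot e e
  + (- dot lam (fun k => r k + e k)
     - dot (vsub (fun k => mu k - rho * (r k + e k)) lam) (fun k => r k + e k)
     + (beta / 2 - rho) * dot (fun k => r k + e k) (fun k => r k + e k)
     + cc * dot (vsub (fun k => (mu k - rho * (r k + e k)) + rho * (r k + e k)) lam)
                (vsub (fun k => (mu k - rho * (r k + e k)) + rho * (r k + e k)) lam))
  = dot mu s - dot mu r - beta * dot r s + beta / 2 * dot r r + cc * dot (vsub mu lam) (vsub mu lam).
Proof.
rewrite /dot /sumR /vsub.
rewrite -!sum_scale.
do 6! rewrite -?sum_opp -?sum_sub ?sum_add.
apply: eq_bigr => k _; field.
Qed.

Lemma qident2 q (mu lam r : Vec q) (rho : R) :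
  dot (vsub (fun k => mu k + rho * r k) lam) (vsub (fun k => mu k + rho * r k) lam)
  = dot (vsub mu lam) (vsub mu lam) + 2 * rho * (dot mu r - dot lam r) + rho * rho * dot r r.
Proof.
rewrite /dot /sumR /vsub.
do 6! rewrite -?sum_scale -?sum_opp -?sum_sub ?sum_add.
apply: eq_bigr => k _; field.
Qed.

Lemma qident3 q (mu lam r : Vec q) : dot (vsub mu lam) r = dot mu r - dot lam r.
Proof. rewrite /dot /sumR /vsub -sum_sub; apply: eq_bigr => k _; ring. Qed.

Lemma big_eplus_some (I : finType) (F : I -> ER) (G : I -> R) :
  (forall i, F i = Some (G i)) -> \big[eplus/Some 0]_(i : I) F i = Some (\big[Rplus/0]_(i : I) G i).
Proof.
move=> H; apply: (big_rec2 (fun e r => e = Some r)) => // i y1 y2 _ ->.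
by rewrite H.
Qed.

Lemma big_eplus_none_seq (I : eqType) (F : I -> ER) (r : seq I) v :
  \big[eplus/Some 0]_(j <- r) F j = Some v -> forall i, i \in r -> F i <> None.
Proof.
elim: r v => [|a r IH] v //=.
rewrite big_cons => + i. rewrite inE => + /orP [/eqP ->|Hi].
- by case: (F a).
- case: (F a) => [fa|] //. case E : (\big[eplus/Some 0]_(j <- r) F j) => [w|] //= _.
  exact: (IH w E i Hi).
Qed.

Lemma big_eplus_none (I : finType) (F : I -> ER) v :
  \big[eplus/Some 0]_(i : I) F i = Some v -> forall i, F i <> None.
Proof. move=> H i; apply: (big_eplus_none_seq H); by rewrite mem_index_enum. Qed.

Section Main.
Variables (N m q : nat) (blk : 'I_N -> 'I_m)
  (f : Vec N -> R) (gradf : Vec N -> Vec N) (g : 'I_m -> Vec N -> ER)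
  (A : 'I_q -> 'I_N -> R) (b : Vec q)
  (L : 'I_m -> R) (beta rho : R) (P : 'I_m -> 'I_N -> 'I_N -> R)
  (xs : Vec N) (lams : Vec q) (Fstar : R).

Hypothesis Hgrad : has_gradient f gradf.
Hypothesis Hconv : convex_fun f.
Hypothesis Hg : forall i, block_fun blk i (g i) /\ proper_fun (g i) /\ convex_efun (g i) /\ lsc_efun (g i).
Hypothesis Hxs : resid A b xs = (fun _ => 0).
Hypothesis HL : forall i, 0 < L i.
Hypothesis Hlip : forall i z y, bnorm blk i (vsub (gradf (vadd z (Ublk blk i y))) (gradf z))
                 <= L i * bnorm blk i y.
Hypothesis HPc : forall i z, bquad blk i (P i) z >=
               L i * bdot blk i z z + beta * dot (bmulv blk i A z) (bmulv blk i A z).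
Hypothesis Hbeta : 0 < beta.
Hypothesis Hrho : 0 < rho.

Definition gv (i : 'I_m) (x : Vec N) : R := match g i x with Some a => a | None => 0 end.
Definition Gv (x : Vec N) : R := \big[Rplus/0]_(i < m) gv i x.
Definition nq (v : Vec q) : R := dot v v.
Definition Qb (i : 'I_m) (u : Vec N) : R := bquad blk i (P i) u.

Lemma sumB_add i (F G : 'I_N -> R) : sumB blk i F + sumB blk i G = sumB blk i (fun j => F j + G j).
Proof. by rewrite /sumB big_split. Qed.

Lemma bquad_ext i Pm (u v : Vec N) : (forall j, blk j = i -> u j = v j) ->
  bquad blk i Pm u = bquad blk i Pm v.
Proof.
move=> H; apply: sumB_ext => j Hj; apply: sumB_ext => l Hl. by rewrite (H _ Hj) (H _ Hl).
Qed.

Lemma bquad_neg i Pm (u v : Vec N) : bquad blk i Pm (vsub u v) = bquad blk i Pm (vsub v u).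
Proof. apply: sumB_ext => j _; apply: sumB_ext => l _; rewrite /vsub; ring. Qed.

Lemma resid_upd i (x x' : Vec N) : (forall j, blk j <> i -> x' j = x j) ->
  resid A b x' = (fun k => resid A b x k + bmulv blk i A (vsub x' x) k).
Proof.
move=> H; apply: functional_extensionality => k.
rewrite /resid /mulv /bmulv.
have -> : sumB blk i (fun j => A k j * vsub x' x j) = sumR (fun j => A k j * vsub x' x j).
  symmetry; apply: sumR_off => j /H; rewrite /vsub => ->; ring.
have -> : sumR (fun j => A k j * vsub x' x j) = sumR (fun j => A k j * x' j) - sumR (fun j => A k j * x j).
  rewrite /sumR -sum_sub; apply: eq_bigr => j _; rewrite /vsub; ring.
ring.
Qed.

Lemma bmulv_sum (u : Vec N) k : \big[Rplus/0]_(i < m) bmulv blk i A u k = mulv A u k.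
Proof. by rewrite /mulv (sumR_blocks blk). Qed.

Lemma mulv_xs (x : Vec N) : mulv A (vsub x xs) = resid A b x.
Proof.
apply: functional_extensionality => k.
have := congr1 (fun F => F k) Hxs. rewrite /resid /= => Hk.
rewrite /mulv.
have -> : sumR (fun j => A k j * vsub x xs j) = sumR (fun j => A k j * x j) - sumR (fun j => A k j * xs j).
  rewrite /sumR -sum_sub; apply: eq_bigr => j _; rewrite /vsub; ring.
rewrite /mulv in Hk. lra.
Qed.

Lemma bdot_tmulv i (w : Vec q) (u : Vec N) : bdot blk i (tmulv A w) u = dot w (bmulv blk i A u).
Proof.
rewrite /bdot /tmulv /dot /bmulv /sumB /sumR.
have -> : \big[Rplus/0]_(j < N | blk j == i) (\big[Rplus/0]_(r < q) (A r j * w r) * u j) =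
          \big[Rplus/0]_(j < N | blk j == i) \big[Rplus/0]_(r < q) (w r * (A r j * u j)).
  apply: eq_bigr => j _. rewrite big_distrl /=. apply: eq_bigr => r _; ring.
rewrite exchange_big /=. apply: eq_bigr => r _. by rewrite big_distrr.
Qed.

Lemma bdot_sub i (c u v : Vec N) : bdot blk i c u - bdot blk i c v = bdot blk i c (vsub u v).
Proof. rewrite /bdot /sumB -sum_sub; apply: eq_bigr => j _; rewrite /vsub; ring. Qed.

Lemma bdot_vsubl i (c c' u : Vec N) : bdot blk i (vsub c c') u = bdot blk i c u - bdot blk i c' u.
Proof. rewrite /bdot /sumB -sum_sub; apply: eq_bigr => j _; rewrite /vsub; ring. Qed.

Lemma gv_some i x a : g i x = Some a -> gv i x = a.
Proof. by rewrite /gv => ->. Qed.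

Lemma step_i (i : 'I_m) (x x' : Vec N) (mu : Vec q) (a : R) :
  g i xs <> None ->
  (forall j, blk j <> i -> x' j = x j) ->
  g i x' = Some a ->
  (forall z gz, (forall j, blk j <> i -> z j = x j) -> g i z = Some gz ->
     bdot blk i (vsub (gradf x) (tmulv A (vsub mu (fun r => beta * resid A b x r)))) x' + a
       + / 2 * bquad blk i (P i) (vsub x' x)
     <= bdot blk i (vsub (gradf x) (tmulv A (vsub mu (fun r => beta * resid A b x r)))) z + gz
       + / 2 * bquad blk i (P i) (vsub z x)) ->
  f x' + a + / 2 * Qb i (vsub x' xs) - / 2 * Qb i (vsub x xs) <=
  f x + gv i xs + bdot blk i (gradf x) (vsub xs x)
  + dot (vsub mu (fun r => beta * resid A b x r))
        (fun k => bmulv blk i A (vsub x' x) k + bmulv blk i A (vsub x xs) k)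
  - beta / 2 * nq (bmulv blk i A (vsub x' x)).
Proof.
move=> Hxsf Hoff Ha Hmin.
have [Hbf [_ [Hcv _]]] := Hg i.
set w := vsub mu (fun r => beta * resid A b x r).
set c := vsub (gradf x) (tmulv A w).
set z := fun j => if blk j == i then xs j else x j.
have Hzo : forall j, blk j <> i -> z j = x j by move=> j /eqP /negbTE; rewrite /z => ->.
have Hzb : forall j, blk j = i -> z j = xs j by move=> j Hj; rewrite /z Hj eqxx.
have Egz : g i z = g i xs by apply: Hbf => j /Hzb.
case Egxs : (g i xs) => [gz|]; last by [].
rewrite Egxs in Egz.
have TP := three_point Hcv Hoff Ha Hmin Hzo Egz.
have E1 : bquad blk i (P i) (vsub z x') = Qb i (vsub x' xs).
  rewrite /Qb bquad_neg; apply: bquad_ext => j Hj; by rewrite /vsub Hzb.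
have E2 : bquad blk i (P i) (vsub z x) = Qb i (vsub x xs).
  rewrite /Qb bquad_neg; apply: bquad_ext => j Hj; by rewrite /vsub Hzb.
have E3 : bdot blk i c z = bdot blk i c xs by apply: sumB_ext => j Hj; rewrite Hzb.
rewrite E1 E2 E3 in TP.
have HD := descent Hgrad (Rlt_le _ _ (HL i)) (Hlip i) Hoff.
have HP := HPc i (vsub x' x).
rewrite (gv_some Egxs).
have Ec : bdot blk i c xs - bdot blk i c x' =
          bdot blk i (gradf x) (vsub xs x') - dot w (bmulv blk i A (vsub xs x')).
  by rewrite bdot_sub /c bdot_vsubl bdot_tmulv.
have Egr : bdot blk i (gradf x) (vsub x' x) + bdot blk i (gradf x) (vsub xs x') = bdot blk i (gradf x) (vsub xs x).
  rewrite /bdot sumB_add; apply: sumB_ext => j _; rewrite /vsub; ring.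
have Ew : dot w (bmulv blk i A (vsub xs x')) =
   - dot w (fun k => bmulv blk i A (vsub x' x) k + bmulv blk i A (vsub x xs) k).
  rewrite /dot /sumR -sum_opp; apply: eq_bigr => k _.
  have -> : bmulv blk i A (vsub xs x') k = - (bmulv blk i A (vsub x' x) k + bmulv blk i A (vsub x xs) k).
    rewrite /bmulv.
    have -> : forall X Y : R, - (X + Y) = (-1) * X + (-1) * Y by move=> *; ring.
    rewrite sumB_lin; apply: sumB_ext => j _; rewrite /vsub; ring.
  ring.
rewrite /Qb. rewrite /nq.
have HLi := HL i.
rewrite -/w -/c /Qb in TP. lra.
Qed.


Definition Phi (x : Vec N) : R := f x + Gv x - Fstar - dot lams (resid A b x).
Definition Pn (x : Vec N) : R := \big[Rplus/0]_(i < m) Qb i (vsub x xs).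
Definition cc : R := / (2 * INR m * rho).
Definition W (x : Vec N) (mu : Vec q) : R :=
  Phi x - dot (vsub mu lams) (resid A b x) + / 2 * Pn x
  + (beta / 2 - rho) * nq (resid A b x)
  + cc * nq (vsub (fun k => mu k + rho * resid A b x k) lams).

Lemma Gv_upd i (x x' : Vec N) : (forall j, blk j <> i -> x' j = x j) ->
  Gv x' = Gv x - gv i x + gv i x'.
Proof.
move=> H. rewrite /Gv (sum_D1 _ i) [in RHS](sum_D1 _ i).
have -> : \big[Rplus/0]_(j | j != i) gv j x' = \big[Rplus/0]_(j | j != i) gv j x.
  apply: eq_bigr => j /eqP Hji. rewrite /gv.
  have [Hbf _] := Hg j. rewrite (Hbf x' x) //.
  move=> jj Hjj; apply: H; rewrite Hjj; exact: Hji.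
ring.
Qed.

Lemma Pn_upd i (x x' : Vec N) : (forall j, blk j <> i -> x' j = x j) ->
  Pn x' = Pn x - Qb i (vsub x xs) + Qb i (vsub x' xs).
Proof.
move=> H. rewrite /Pn (sum_D1 _ i) [in RHS](sum_D1 _ i).
have -> : \big[Rplus/0]_(j | j != i) Qb j (vsub x' xs) = \big[Rplus/0]_(j | j != i) Qb j (vsub x xs).
  apply: eq_bigr => j /eqP Hji. rewrite /Qb; apply: bquad_ext => jj Hjj.
  rewrite /vsub H //; rewrite Hjj; exact: Hji.
ring.
Qed.

Lemma Wi_bound (i : 'I_m) (x x' : Vec N) (mu : Vec q) (a : R) :
  g i xs <> None ->
  (forall j, blk j <> i -> x' j = x j) ->
  g i x' = Some a ->
  (forall z gz, (forall j, blk j <> i -> z j = x j) -> g i z = Some gz ->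
     bdot blk i (vsub (gradf x) (tmulv A (vsub mu (fun r => beta * resid A b x r)))) x' + a
       + / 2 * bquad blk i (P i) (vsub x' x)
     <= bdot blk i (vsub (gradf x) (tmulv A (vsub mu (fun r => beta * resid A b x r)))) z + gz
       + / 2 * bquad blk i (P i) (vsub z x)) ->
  W x' (fun k => mu k - rho * resid A b x' k) <=
  f x + gv i xs + bdot blk i (gradf x) (vsub xs x) + Gv x - gv i x - Fstar
  + dot mu (bmulv blk i A (vsub x xs)) - dot mu (resid A b x)
  - beta * dot (resid A b x) (bmulv blk i A (vsub x xs))
  + beta / 2 * nq (resid A b x) + / 2 * Pn x + cc * nq (vsub mu lams).
Proof.
move=> Hxsf Hoff Ha Hmin.
have Hst := step_i Hxsf Hoff Ha Hmin.
rewrite /W /Phi (Gv_upd Hoff) (Pn_upd Hoff) (gv_some Ha) (resid_upd Hoff) /=.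
have Hq := qident mu lams (resid A b x) (bmulv blk i A (vsub x' x)) (bmulv blk i A (vsub x xs)) beta rho cc.
rewrite /nq in Hst *.
lra.
Qed.

Lemma sum_C (K : R) (a1 a2 a3 a4 a5 : 'I_m -> R) (be : R) :
  \big[Rplus/0]_(i < m) (K + a1 i + a2 i - a3 i + a4 i - be * a5 i) =
  INR m * K + \big[Rplus/0]_(i < m) a1 i + \big[Rplus/0]_(i < m) a2 i - \big[Rplus/0]_(i < m) a3 i
  + \big[Rplus/0]_(i < m) a4 i - be * \big[Rplus/0]_(i < m) a5 i.
Proof.
rewrite -sum_const_ord.
do 3! rewrite -?sum_scale -?sum_opp -?sum_sub ?sum_add.
apply: eq_bigr => i _; ring.
Qed.

Lemma dot_sum (v : Vec q) (S : 'I_m -> Vec q) :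
  \big[Rplus/0]_(i < m) dot v (S i) = dot v (fun k => \big[Rplus/0]_(i < m) S i k).
Proof.
rewrite /dot /sumR exchange_big /=. apply: eq_bigr => k _. by rewrite big_distrr.
Qed.

Lemma bdot_sum (u v : Vec N) : \big[Rplus/0]_(i < m) bdot blk i u v = dot u v.
Proof. by rewrite /dot (sumR_blocks blk). Qed.

Lemma sum_bmulv_xs (x : Vec N) :
  (fun k => \big[Rplus/0]_(i < m) bmulv blk i A (vsub x xs) k) = resid A b x.
Proof. rewrite -mulv_xs; apply: functional_extensionality => k; exact: bmulv_sum. Qed.

Hypothesis Hm : (0 < m)%nat.
Hypothesis Hrm : rho <= beta / INR m.
Hypothesis HFs : Fobj f g xs = Some Fstar.

Lemma xs_fin : forall j, g j xs <> None.
Proof.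
move: HFs; rewrite /Fobj.
case E : (\big[eplus/Some 0]_(i < m) g i xs) => [v|] //= _.
exact: (big_eplus_none E).
Qed.

Lemma Fobj_fin (x : Vec N) : (forall j, g j x <> None) -> Fobj f g x = Some (f x + Gv x).
Proof.
move=> H. rewrite /Fobj (@big_eplus_some _ (fun i => g i x) (fun i => gv i x)) //.
move=> i. rewrite /gv. by case: (g i x) (H i).
Qed.

Lemma Fstar_eq : Fstar = f xs + Gv xs.
Proof. have := Fobj_fin xs_fin. rewrite HFs. by case. Qed.

Lemma W_step (x : Vec N) (mu : Vec q) (x' : 'I_m -> Vec N) :
  (forall i, (forall j, blk j <> i -> x' i j = x j) /\
     (exists a, g i (x' i) = Some a /\
       forall z gz, (forall j, blk j <> i -> z j = x j) -> g i z = Some gz ->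
       bdot blk i (vsub (gradf x) (tmulv A (vsub mu (fun r => beta * resid A b x r)))) (x' i) + a
         + / 2 * bquad blk i (P i) (vsub (x' i) x)
       <= bdot blk i (vsub (gradf x) (tmulv A (vsub mu (fun r => beta * resid A b x r)))) z + gz
         + / 2 * bquad blk i (P i) (vsub z x))) ->
  \big[Rplus/0]_(i < m) W (x' i) (fun k => mu k - rho * resid A b (x' i) k)
  + Phi x + rho / 2 * nq (resid A b x) <= INR m * W x mu.
Proof.
move=> Hup.
set r := resid A b x.
set M := INR m.
have HM : 0 < M by apply: lt_0_INR; apply/ltP.
pose C := fun i : 'I_m =>
  f x + gv i xs + bdot blk i (gradf x) (vsub xs x) + Gv x - gv i x - Fstar
  + dot mu (bmulv blk i A (vsub x xs)) - dot mu r
  - beta * dot r (bmulv blk i A (vsub x xs))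
  + beta / 2 * nq r + / 2 * Pn x + cc * nq (vsub mu lams).
have H1 : \big[Rplus/0]_(i < m) W (x' i) (fun k => mu k - rho * resid A b (x' i) k)
          <= \big[Rplus/0]_(i < m) C i.
  apply: sum_le => i _.
  have [Hoff [a [Ha Hmin]]] := Hup i.
  exact: (Wi_bound (@xs_fin i) Hoff Ha Hmin).
have EC : \big[Rplus/0]_(i < m) C i =
   M * (f x + Gv x - Fstar - dot mu r + beta / 2 * nq r + / 2 * Pn x + cc * nq (vsub mu lams))
   + \big[Rplus/0]_(i < m) gv i xs + \big[Rplus/0]_(i < m) bdot blk i (gradf x) (vsub xs x)
   - \big[Rplus/0]_(i < m) gv i x
   + \big[Rplus/0]_(i < m) dot mu (bmulv blk i A (vsub x xs))
   - beta * \big[Rplus/0]_(i < m) dot r (bmulv blk i A (vsub x xs)).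
  rewrite /M -sum_C; apply: eq_bigr => i _; rewrite /C; field.
rewrite EC in H1.
rewrite bdot_sum !dot_sum sum_bmulv_xs in H1.
have Hcg := conv_grad x xs Hconv Hgrad.
have HFst := Fstar_eq.
have E2 := qident2 mu lams r rho.
have E3 := qident3 mu lams r.
have Hnq : 0 <= nq r by apply: dot_ge0.
have HMcc : M * cc = / (2 * rho) by rewrite /cc -/M; field; repeat split; lra.
have HMr : M * rho * nq r <= beta * nq r.
  apply: Rmult_le_compat_r => //.
  have := Rmult_le_compat_l M _ _ (Rlt_le _ _ HM) Hrm.
  have -> : M * (beta / INR m) = beta by rewrite -/M; field; lra.
  by [].
set SW := \big[Rplus/0]_(i < m) W (x' i) _ in H1 *.
rewrite -/r in H1.
rewrite /W /Phi -/r.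
rewrite /nq in E2 Hnq HMr H1 *.
rewrite E2 E3.
have F1 : M * (cc * dot (vsub mu lams) (vsub mu lams)) = / (2 * rho) * dot (vsub mu lams) (vsub mu lams)
  by rewrite -Rmult_assoc HMcc.
have F2 : M * (cc * (dot (vsub mu lams) (vsub mu lams) + 2 * rho * (dot mu r - dot lams r) + rho * rho * dot r r))
   = / (2 * rho) * dot (vsub mu lams) (vsub mu lams) + (dot mu r - dot lams r) + rho / 2 * dot r r.
  rewrite -Rmult_assoc HMcc; field; lra.
rewrite /Gv in HFst H1 *.
lra.

Qed.

Lemma coord_ineq (c a r rh be : R) : 0 < c -> 1 <= 2 * c * be ->
  0 <= - (a * r) + (be / 2 - rh) * (r * r) + c * ((a + rh * r) * (a + rh * r)).
Proof.
move=> Hc Hcb.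
have -> : - (a * r) + (be / 2 - rh) * (r * r) + c * ((a + rh * r) * (a + rh * r)) =
   ((2 * c * (a + rh * r) - r) * (2 * c * (a + rh * r) - r) + (2 * c * be - 1) * (r * r)) / (4 * c).
  field; lra.
apply: Rmult_le_pos; last by apply: Rlt_le; apply: Rinv_0_lt_compat; lra.
have := Rle_0_sqr (2 * c * (a + rh * r) - r). rewrite /Rsqr.
have : 0 <= (2 * c * be - 1) * (r * r) by apply: Rmult_le_pos; [lra | apply: Rle_0_sqr].
lra.
Qed.

Lemma W_diff (mu lam r : Vec q) (c be rh : R) :
  - dot (vsub mu lam) r + (be / 2 - rh) * dot r r
  + c * dot (vsub (fun k => mu k + rh * r k) lam) (vsub (fun k => mu k + rh * r k) lam)
  = sumR (fun k => - ((mu k - lam k) * r k) + (be / 2 - rh) * (r k * r k)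
           + c * (((mu k - lam k) + rh * r k) * ((mu k - lam k) + rh * r k))).
Proof.
rewrite /dot /sumR /vsub.
do 4! rewrite -?sum_scale -?sum_opp -?sum_sub ?sum_add.
apply: eq_bigr => k _; ring.
Qed.

Hypothesis HPpos : forall i z, 0 <= bquad blk i (P i) z.
Hypothesis Hopt : forall z, match Fobj f g z with
             | None => True
             | Some v => v - Fstar - dot lams (resid A b z) >= 0 end.

Lemma Pn_ge0 x : 0 <= Pn x.
Proof. apply: sum_ge0 => i _; exact: HPpos. Qed.

Lemma Phi_ge0 x : (forall j, g j x <> None) -> 0 <= Phi x.
Proof.
move=> H. have := Hopt x. rewrite (Fobj_fin H) /Phi /Gv. lra.
Qed.

Lemma cc_pos : 0 < cc.
Proof.
rewrite /cc. apply: Rinv_0_lt_compat.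
have : 0 < INR m by apply: lt_0_INR; apply/ltP.
nra.
Qed.

Lemma cc_beta : 1 <= 2 * cc * beta.
Proof.
have HM : 0 < INR m by apply: lt_0_INR; apply/ltP.
have : INR m * rho <= beta.
  have := Rmult_le_compat_l (INR m) _ _ (Rlt_le _ _ HM) Hrm.
  have -> : INR m * (beta / INR m) = beta by field; lra.
  done.
rewrite /cc.
have -> : 2 * / (2 * INR m * rho) * beta = beta / (INR m * rho) by field; lra.
move=> H. apply: (Rmult_le_reg_r (INR m * rho)); first nra.
have -> : beta / (INR m * rho) * (INR m * rho) = beta by field; lra.
lra.
Qed.

Lemma W_ge_Phi x mu : Phi x <= W x mu.
Proof.
rewrite /W /nq.
have E := W_diff mu lams (resid A b x) cc beta rho.
have H : 0 <= sumR (fun k => - ((mu k - lams k) * resid A b x k) + (beta / 2 - rho) * (resid A b x k * resid A b x k)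
           + cc * (((mu k - lams k) + rho * resid A b x k) * ((mu k - lams k) + rho * resid A b x k))).
  apply: sum_ge0 => k _. apply: coord_ineq; [exact: cc_pos | exact: cc_beta].
have := Pn_ge0 x.
lra.
Qed.

Variables (xx : forall k, k.-tuple 'I_m -> Vec N) (ll : forall k, k.-tuple 'I_m -> Vec q).
Hypothesis Halg : algorithm1 blk f gradf g A b beta rho P xx ll.

Lemma alg_i k (t : k.-tuple 'I_m) (i : 'I_m) :
  (forall j, blk j <> i -> xx [tuple of rcons t i] j = xx t j) /\
  (exists a, g i (xx [tuple of rcons t i]) = Some a /\
     forall z gz, (forall j, blk j <> i -> z j = xx t j) -> g i z = Some gz ->
     bdot blk i (vsub (gradf (xx t)) (tmulv A (vsub (ll t) (fun r => beta * resid A b (xx t) r))))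
       (xx [tuple of rcons t i]) + a
       + / 2 * bquad blk i (P i) (vsub (xx [tuple of rcons t i]) (xx t))
     <= bdot blk i (vsub (gradf (xx t)) (tmulv A (vsub (ll t) (fun r => beta * resid A b (xx t) r)))) z + gz
       + / 2 * bquad blk i (P i) (vsub z (xx t))) /\
  ll [tuple of rcons t i] = (fun r => ll t r - rho * resid A b (xx [tuple of rcons t i]) r).
Proof. exact: (Halg.2 k t i). Qed.

Lemma alg_step k (t : k.-tuple 'I_m) :
  \big[Rplus/0]_(i < m) W (xx [tuple of rcons t i]) (ll [tuple of rcons t i])
  + Phi (xx t) + rho / 2 * nq (resid A b (xx t)) <= INR m * W (xx t) (ll t).
Proof.
have -> : \big[Rplus/0]_(i < m) W (xx [tuple of rcons t i]) (ll [tuple of rcons t i]) =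
          \big[Rplus/0]_(i < m) W (xx [tuple of rcons t i])
             (fun r => ll t r - rho * resid A b (xx [tuple of rcons t i]) r).
  apply: eq_bigr => i _. by rewrite (alg_i t i).2.2.
apply: (W_step (x' := fun i => xx [tuple of rcons t i])).
move=> i. have [H1 [H2 _]] := alg_i t i. by split.
Qed.

Lemma fin_mem k (t : k.-tuple 'I_m) j : j \in t -> g j (xx t) <> None.
Proof.
elim: k t => [|k IH] t.
- by case: t => [[|]].
- have [t' [i ->]] := @tuple_rcons_ex _ _ t.
  have [Hoff [[a [Ha _]] _]] := alg_i t' i.
  rewrite /= mem_rcons inE => /orP [/eqP ->|Hj].
  + by rewrite Ha.
  + have [Hbf _] := Hg j.
    case: (eqVneq j i) => [-> | Hji]; first by rewrite Ha.
    rewrite (Hbf _ (xx t')); first exact: IH.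
    move=> jj Hjj. apply: Hoff. rewrite Hjj. by apply/eqP.
Qed.

Definition covK (K : nat) (s : seq 'I_m) : bool := [forall j, j \in take K s].

Lemma cov_fin K k (t : k.-tuple 'I_m) : covK K t -> forall j, g j (xx t) <> None.
Proof. move=> /forallP H j; apply: fin_mem; exact: mem_take (H j). Qed.

Lemma covK_rcons K k (t : k.-tuple 'I_m) i : (K <= k)%nat -> covK K (rcons t i) = covK K t.
Proof.
move=> HK. rewrite /covK -cats1 takel_cat //. by rewrite size_tuple.
Qed.

Lemma sum_cov_rcons K k (h : k.+1.-tuple 'I_m -> R) : (K <= k)%nat ->
  \big[Rplus/0]_(u : k.+1.-tuple 'I_m | covK K u) h u =
  \big[Rplus/0]_(t : k.-tuple 'I_m | covK K t) \big[Rplus/0]_(i < m) h [tuple of rcons t i].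
Proof.
move=> HK. rewrite big_mkcond sum_rcons [RHS]big_mkcond /=.
apply: eq_bigr => t _. case Ht : (covK K t).
- apply: eq_bigr => i _. by rewrite /= covK_rcons // Ht.
- apply: big1 => i _. by rewrite /= covK_rcons // Ht.
Qed.

Definition Yv k (t : k.-tuple 'I_m) : R := Phi (xx t) + rho / 2 * nq (resid A b (xx t)).
Definition SV K k : R := \big[Rplus/0]_(t : k.-tuple 'I_m | covK K t) W (xx t) (ll t).
Definition SA K k : R := \big[Rplus/0]_(t : k.-tuple 'I_m | covK K t) Yv t.

Lemma SV_rec K k : (K <= k)%nat -> SV K k.+1 + SA K k <= INR m * SV K k.
Proof.
move=> HK. rewrite /SV /SA (sum_cov_rcons _ HK) sum_add -sum_scale.
apply: sum_le => t _. rewrite /Yv. have := alg_step t. lra.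
Qed.

Lemma Yv_ge0 K k (t : k.-tuple 'I_m) : covK K t -> 0 <= Yv t.
Proof.
move=> Hc. rewrite /Yv. have := Phi_ge0 (cov_fin Hc). have : 0 <= nq (resid A b (xx t)) by apply: dot_ge0.
have := Hrho. nra.
Qed.

Lemma SA_ge0 K k : 0 <= SA K k.
Proof. apply: sum_ge0 => t Hc; exact: Yv_ge0 Hc. Qed.

Lemma SV_ge0 K k : 0 <= SV K k.
Proof.
apply: sum_ge0 => t Hc. apply: Rle_trans (W_ge_Phi _ _). exact: Phi_ge0 (cov_fin Hc).
Qed.

Lemma M_pos : 0 < INR m.
Proof. by apply: lt_0_INR; apply/ltP. Qed.

Lemma SA_cv K : Un_cv (fun n => SA K (n + K) / INR m ^ (n + K)) 0.
Proof.
have HM := M_pos.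
set u := fun n => SV K (n + K) / INR m ^ (n + K).
have Hpow : forall k, 0 < INR m ^ k by move=> k; apply: pow_lt.
have Hrec : forall n, u n.+1 + SA K (n + K) / INR m ^ (n + K) / INR m <= u n.
  move=> n. rewrite /u.
  have H := SV_rec (leq_addl n K).
  have Hp := Hpow (n + K)%nat.
  have -> : SV K (n.+1 + K) / INR m ^ (n.+1 + K) = SV K (n + K).+1 / (INR m * INR m ^ (n + K)) by [].
  have -> : SV K (n + K).+1 / (INR m * INR m ^ (n + K)) + SA K (n + K) / INR m ^ (n + K) / INR m
           = (SV K (n + K).+1 + SA K (n + K)) / (INR m * INR m ^ (n + K)) by field; lra.
  apply: (Rmult_le_reg_r (INR m * INR m ^ (n + K))); first nra.
  have -> : (SV K (n + K).+1 + SA K (n + K)) / (INR m * INR m ^ (n + K)) * (INR m * INR m ^ (n + K))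
     = SV K (n + K).+1 + SA K (n + K) by field; lra.
  have -> : SV K (n + K) / INR m ^ (n + K) * (INR m * INR m ^ (n + K)) = INR m * SV K (n + K) by field; lra.
  exact: H.
have Ha0 : forall n, 0 <= SA K (n + K) / INR m ^ (n + K).
  move=> n; apply: Rmult_le_pos; [exact: SA_ge0 | apply: Rlt_le; apply: Rinv_0_lt_compat; exact: Hpow].
have Hu0 : forall n, 0 <= u n.
  move=> n; apply: Rmult_le_pos; [exact: SV_ge0 | apply: Rlt_le; apply: Rinv_0_lt_compat; exact: Hpow].
have Hdec : Un_decreasing u.
  move=> n. have := Hrec n. have := Ha0 n.
  have : 0 <= SA K (n + K) / INR m ^ (n + K) / INR m by apply: Rmult_le_pos => //; apply: Rlt_le; apply: Rinv_0_lt_compat.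
  lra.
have Hlb : has_lb u.
  exists 0 => y [n ->]. rewrite /opp_seq. have := Hu0 n. lra.
have [l Hl] := decreasing_cv u Hdec Hlb.
move=> eps Heps.
have He2 : 0 < eps / (2 * INR m) by apply: Rdiv_lt_0_compat; lra.
have [N0 HN0] := Hl _ He2.
exists N0 => n Hn.
have H1 := HN0 n Hn.
have H2 := HN0 n.+1 (le_S _ _ Hn).
rewrite /R_dist in H1 H2 *.
have H3 := Hrec n. have H4 := Ha0 n.
rewrite Rminus_0_r Rabs_pos_eq //.
have H5 : SA K (n + K) / INR m ^ (n + K) <= INR m * (u n - u n.+1).
  have -> : SA K (n + K) / INR m ^ (n + K) = INR m * (SA K (n + K) / INR m ^ (n + K) / INR m) by have := Hpow (n + K)%nat; move=> ?; field; repeat split; lra.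
  apply: Rmult_le_compat_l; lra.
have := Rabs_def2 _ _ H1. have := Rabs_def2 _ _ H2. move=> [H6 H7] [H8 H9].
have : u n - u n.+1 < eps / INR m.
  have -> : eps / INR m = 2 * (eps / (2 * INR m)) by field; lra.
  lra.
move=> H10.
have := Rmult_lt_compat_l (INR m) _ _ HM H10.
have -> : INR m * (eps / INR m) = eps by field; lra.
lra.
Qed.

Definition ind (c : bool) : R := if c then 1 else 0.

Lemma ind_ge0 c : 0 <= ind c.
Proof. rewrite /ind; case: c; lra. Qed.

Definition UK K k : R := \big[Rplus/0]_(t : k.-tuple 'I_m) ind (~~ covK K t).

Lemma UK_rec K k : (K <= k)%nat -> UK K k.+1 = INR m * UK K k.
Proof.
move=> HK. rewrite /UK sum_rcons -sum_scale. apply: eq_bigr => t _.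
rewrite (eq_bigr (fun _ => ind (~~ covK K t))); first by rewrite sum_const_ord.
move=> i _. by rewrite /= covK_rcons.
Qed.

Lemma UK_shift K n : UK K (n + K) / INR m ^ (n + K) = UK K K / INR m ^ K.
Proof.
have HM := M_pos.
elim: n => [|n IH] //.
have -> : UK K (n.+1 + K) / INR m ^ (n.+1 + K) = UK K (n + K).+1 / (INR m * INR m ^ (n + K)) by [].
rewrite UK_rec; last exact: leq_addl.
rewrite -IH. field. split; [apply: Rgt_not_eq; apply: pow_lt | ]; lra.
Qed.

Definition Zc (j : 'I_m) k : R := \big[Rplus/0]_(t : k.-tuple 'I_m) ind (j \notin t).

Lemma Zc_val j k : Zc j k = (INR m - 1) ^ k.
Proof.
elim: k => [|k IH].
- rewrite /Zc (eq_bigr (fun _ => 1)); first by rewrite big_const card_tuple /=; ring.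
  by move=> t _; case: t => [[|] ?].
- rewrite /Zc sum_rcons /=.
  have -> : \big[Rplus/0]_(t : k.-tuple 'I_m) \big[Rplus/0]_(i < m) ind (j \notin [tuple of rcons t i])
     = \big[Rplus/0]_(t : k.-tuple 'I_m) ((INR m - 1) * ind (j \notin t)).
    apply: eq_bigr => t _.
    have -> : \big[Rplus/0]_(i < m) ind (j \notin [tuple of rcons t i]) =
              \big[Rplus/0]_(i < m) (ind (j != i) * ind (j \notin t)).
      apply: eq_bigr => i _. rewrite /= mem_rcons inE negb_or /ind.
      by case: (j == i); case: (j \in t) => /=; ring.
    rewrite -big_distrl /=. congr Rmult.
    have E1 := sum_D1 _ j (fun i => ind (j != i)).
    have E2 : \big[Rplus/0]_(i < m) (1:R) = 1 + \big[Rplus/0]_(i | i != j) 1 by apply: sum_D1.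
    rewrite sum_const_ord in E2.
    rewrite E1 /ind eqxx /=.
    have -> : \big[Rplus/0]_(i | i != j) (if j != i then 1 else 0) = \big[Rplus/0]_(i | i != j) 1.
      apply: eq_bigr => i Hi. by rewrite eq_sym Hi.
    lra.
  rewrite sum_scale. rewrite /Zc in IH. rewrite IH. by [].
Qed.

Lemma UK_bound K : UK K K <= INR m * (INR m - 1) ^ K.
Proof.
have -> : INR m * (INR m - 1) ^ K = \big[Rplus/0]_(j < m) Zc j K.
  rewrite (eq_bigr (fun _ => (INR m - 1) ^ K)); first by rewrite sum_const_ord.
  by move=> j _; rewrite Zc_val.
rewrite /Zc exchange_big /=. apply: sum_le => t _.
case Hc : (covK K t); first by rewrite /ind /=; apply: sum_ge0 => j _; exact: ind_ge0.
move: Hc. rewrite /covK take_oversize; last by rewrite size_tuple.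
move/negbT. rewrite negb_forall => /existsP [j Hj].
rewrite (sum_D1 _ j) /ind Hj /=.
rewrite -{1}(Rplus_0_r 1); apply: Rplus_le_compat_l.
apply: sum_ge0 => i _; case: (i \notin t); lra.
Qed.

Lemma prob_cv (E : forall k, k.-tuple 'I_m -> Prop) (eta : R) : 0 < eta ->
  (forall k (t : k.-tuple 'I_m), (forall j, g j (xx t) <> None) -> E k t -> eta <= Yv t) ->
  Un_cv (fun k => prob (E k)) 0.
Proof.
move=> Heta HE eps Heps.
have HM := M_pos.
have Hm1 : 1 <= INR m by apply: (le_INR 1); apply/leP.
set r0 := (INR m - 1) / INR m.
have Hr0a : 0 <= r0 by apply: Rmult_le_pos; [lra | apply: Rlt_le; apply: Rinv_0_lt_compat].
have Hr0b : r0 < 1.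
  apply: (Rmult_lt_reg_r (INR m)) => //. rewrite /r0.
  have -> : (INR m - 1) / INR m * INR m = INR m - 1 by field; lra.
  lra.
have Hr0 : Rabs r0 < 1 by rewrite Rabs_pos_eq.
have He1 : 0 < eps / (2 * INR m) by apply: Rdiv_lt_0_compat; lra.
have [K HK] := pow_lt_1_zero r0 Hr0 _ He1.
have HK0 := HK K (le_n K).
rewrite Rabs_pos_eq in HK0; last by apply: pow_le.
have He2 : 0 < eps * eta / 2 by have := Rmult_lt_0_compat _ _ Heps Heta; lra.
have [N1 HN1] := SA_cv K He2.
exists (N1 + K)%nat => k Hk.
have HkK : (K <= k)%nat.
  move/leP: Hk => Hk. apply: leq_trans Hk. exact: leq_addl.
have Hkn : k = (k - K + K)%nat by rewrite subnK.
move: (k - K)%nat Hkn Hk => n Hkn Hk. subst k.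
have Hn : (n >= N1)%coq_nat.
  apply/leP. move/leP: Hk. by rewrite leq_add2r.
have HA := HN1 n Hn. rewrite /R_dist Rminus_0_r in HA.
have Hp : 0 < INR m ^ (n + K) by apply: pow_lt.
have HpK : 0 < INR m ^ K by apply: pow_lt.
have Hpt : forall t : (n + K).-tuple 'I_m,
    (if excluded_middle_informative (E (n + K)%nat t) then 1 else 0)
    <= ind (~~ covK K t) + (if covK K t then Yv t / eta else 0).
  move=> t. case Hc : (covK K t) => /=.
  - have HY := Yv_ge0 Hc.
    have HYe : 0 <= Yv t / eta by apply: Rmult_le_pos => //; apply: Rlt_le; apply: Rinv_0_lt_compat.
    rewrite /ind /=.
    case: excluded_middle_informative => HEt /=; last lra.
    have := HE _ t (cov_fin Hc) HEt => Hle.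
    have : 1 <= Yv t / eta.
      apply: (Rmult_le_reg_r eta) => //.
      have -> : Yv t / eta * eta = Yv t by field; lra.
      lra.
    lra.
  - rewrite /ind /=. case: excluded_middle_informative => _ /=; lra.
have Hsum : \big[Rplus/0]_(t : (n + K).-tuple 'I_m)
      (if excluded_middle_informative (E (n + K)%nat t) then 1 else 0)
    <= UK K (n + K) + SA K (n + K) / eta.
  apply: Rle_trans; first by apply: sum_le => t _; exact: Hpt t.
  rewrite -sum_add. apply: Rplus_le_compat_l.
  rewrite /SA -big_mkcond /Rdiv Rmult_comm -sum_scale.
  right; apply: eq_bigr => t _; ring.
have Hnn : 0 <= \big[Rplus/0]_(t : (n + K).-tuple 'I_m)
      (if excluded_middle_informative (E (n + K)%nat t) then 1 else 0).
  apply: sum_ge0 => t _; case: excluded_middle_informative => _ /=; lra.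
rewrite /R_dist Rminus_0_r /prob.
rewrite Rabs_pos_eq; last by apply: Rmult_le_pos => //; apply: Rlt_le; apply: Rinv_0_lt_compat.
have HU := UK_shift K n.
have HUb := UK_bound K.
have HSA0 := SA_ge0 K (n + K).
have H1 : UK K K / INR m ^ K <= INR m * r0 ^ K.
  have -> : INR m * r0 ^ K = INR m * (INR m - 1) ^ K / INR m ^ K.
    rewrite /r0 /Rdiv Rpow_mult_distr pow_inv. field; repeat split; try apply: pow_nonzero; lra.
  apply: Rmult_le_compat_r => //. apply: Rlt_le; exact: Rinv_0_lt_compat.
have H2 : INR m * r0 ^ K < eps / 2.
  have := Rmult_lt_compat_l (INR m) _ _ HM HK0.
  have -> : INR m * (eps / (2 * INR m)) = eps / 2 by field; lra.
  done.
have H3 : SA K (n + K) / eta / INR m ^ (n + K) < eps / 2.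
  have -> : SA K (n + K) / eta / INR m ^ (n + K) = (SA K (n + K) / INR m ^ (n + K)) / eta by field; lra.
  rewrite Rabs_pos_eq in HA; last by apply: Rmult_le_pos => //; apply: Rlt_le; apply: Rinv_0_lt_compat.
  apply: (Rmult_lt_reg_r eta) => //.
  have -> : SA K (n + K) / INR m ^ (n + K) / eta * eta = SA K (n + K) / INR m ^ (n + K) by field; lra.
  have -> : eps / 2 * eta = eps * eta / 2 by field.
  exact: HA.
have : \big[Rplus/0]_(t : (n + K).-tuple 'I_m)
      (if excluded_middle_informative (E (n + K)%nat t) then 1 else 0) / INR m ^ (n + K)
    <= UK K (n + K) / INR m ^ (n + K) + SA K (n + K) / eta / INR m ^ (n + K).
  rewrite -Rdiv_plus_distr. apply: Rmult_le_compat_r => //.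
  apply: Rlt_le; exact: Rinv_0_lt_compat.
lra.
Qed.
End Main.

Unset Implicit Arguments.

Lemma abs_dot_bound q (u v : Vec q) (s : R) : 0 < s ->
  Rabs (dot u v) <= s / 2 * dot u u + / (2 * s) * dot v v.
Proof.
move=> Hs.
have E : s / 2 * dot u u + / (2 * s) * dot v v =
         sumR (fun k => s / 2 * (u k * u k) + / (2 * s) * (v k * v k)).
  by rewrite /dot /sumR sum_lin.
rewrite E. apply: Rabs_le; split.
- have -> : - sumR (fun k => s / 2 * (u k * u k) + / (2 * s) * (v k * v k)) =
            sumR (fun k => - (s / 2 * (u k * u k) + / (2 * s) * (v k * v k))) by rewrite /sumR sum_opp.
  apply: sum_le => k _.
  have : 0 <= (s * u k + v k) * (s * u k + v k) / (2 * s).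
    apply: Rmult_le_pos; [apply: Rle_0_sqr | apply: Rlt_le; apply: Rinv_0_lt_compat; lra].
  have -> : (s * u k + v k) * (s * u k + v k) / (2 * s) =
            s / 2 * (u k * u k) + / (2 * s) * (v k * v k) + u k * v k by field; lra.
  lra.
- apply: sum_le => k _.
  have : 0 <= (s * u k - v k) * (s * u k - v k) / (2 * s).
    apply: Rmult_le_pos; [apply: Rle_0_sqr | apply: Rlt_le; apply: Rinv_0_lt_compat; lra].
  have -> : (s * u k - v k) * (s * u k - v k) / (2 * s) =
            s / 2 * (u k * u k) + / (2 * s) * (v k * v k) - u k * v k by field; lra.
  lra.
Qed.

Theorem mainTheorem6
  (N m q : nat) (blk : 'I_N -> 'I_m)
  (f : Vec N -> R) (gradf : Vec N -> Vec N) (g : 'I_m -> Vec N -> ER)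
  (A : 'I_q -> 'I_N -> R) (b : Vec q)
  (L : 'I_m -> R) (Lr : R) (beta rho : R) (P : 'I_m -> 'I_N -> 'I_N -> R)
  (xs : Vec N) (lams : Vec q) (Fstar : R)
  (x : forall k, k.-tuple 'I_m -> Vec N) (lam : forall k, k.-tuple 'I_m -> Vec q) :
  (0 < m)%nat ->
  (forall i : 'I_m, exists j, blk j = i) ->
  (* f convex, continuously differentiable *)
  convex_fun f -> has_gradient f gradf -> continuous_map gradf ->
  (* g_i proper convex lsc, depending on x_i only *)
  (forall i, block_fun blk i (g i) /\ proper_fun (g i) /\ convex_efun (g i) /\ lsc_efun (g i)) ->
  (* existence of a solution *)
  resid A b xs = (fun _ => 0) -> Fobj f g xs = Some Fstar ->
  (forall z, match Fobj f g z with
             | None => True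
             | Some v => v - Fstar - dot lams (resid A b z) >= 0 end) ->
  (* gradient Lipschitz continuity *)
  (forall i, 0 < L i) ->
  (forall i z y, bnorm blk i (vsub (gradf (vadd z (Ublk blk i y))) (gradf z))
                 <= L i * bnorm blk i y) ->
  (forall i z y, norm (vsub (gradf (vadd z (Ublk blk i y))) (gradf z))
                 <= Lr * bnorm blk i y) ->
  (* parameters *)
  0 < beta -> 0 < rho -> rho <= beta / INR m ->
  (forall i j l, P i j l = P i l j) ->
  (forall i z, 0 <= bquad blk i (P i) z) ->
  (forall i z, bquad blk i (P i) z >=
               L i * bdot blk i z z + beta * dot (bmulv blk i A z) (bmulv blk i A z)) ->
  (* iterates of Algorithm 1 *)
  algorithm1 blk f gradf g A b beta rho P x lam ->
  (* conclusions: convergence in probability *)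
  (forall eps, 0 < eps ->
     Un_cv (fun k => prob (fun t : k.-tuple 'I_m =>
              ~ (exists v, Fobj f g (x k t) = Some v /\ Rabs (v - Fstar) < eps))) 0) /\
  (forall eps, 0 < eps ->
     Un_cv (fun k => prob (fun t : k.-tuple 'I_m => norm (resid A b (x k t)) >= eps)) 0).
Proof.
move=> Hm Hblk Hconv Hgrad Hcont Hg Hxs HFs Hopt HL Hlip Hlipr Hbeta Hrho Hrm Hsym HPpos HPc Halg.
have PC := prob_cv Hgrad Hconv Hg Hxs HL Hlip HPc Hrho Hm Hrm HFs HPpos Hopt Halg.
split.
- move=> eps Heps.
  set nl := dot lams lams.
  have Hnl : 0 <= nl by apply: dot_ge0.
  set s := eps / (nl + 1).
  have Hs : 0 < s by apply: Rdiv_lt_0_compat; lra.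
  set c := / (s * rho).
  have Hc : 0 < c by apply: Rinv_0_lt_compat; apply: Rmult_lt_0_compat.
  have Heta : 0 < eps / (2 * (1 + c)) by apply: Rdiv_lt_0_compat; lra.
  apply: (PC _ _ Heta) => k t Hfin HE.
  have HF := Fobj_fin f Hfin.
  have HPhi := Phi_ge0 Hopt Hfin.
  rewrite /Yv. rewrite /Phi in HPhi *.
  set r := resid A b (x k t).
  set D := dot lams r.
  have Hnr : 0 <= nq r by apply: dot_ge0.
  have HD := abs_dot_bound _ lams r s Hs. rewrite -/D -/nl in HD.
  have Habs : eps <= Rabs (f (x k t) + Gv g (x k t) - Fstar).
    apply: Rnot_lt_le => Hlt. apply: HE. by exists (f (x k t) + Gv g (x k t)).
  have Hsl : s / 2 * nl <= eps / 2.
    have -> : s / 2 * nl = eps / 2 * (nl / (nl + 1)) by rewrite /s; field; lra.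
    have : nl / (nl + 1) <= 1.
      apply: (Rmult_le_reg_r (nl + 1)); first lra.
      have -> : nl / (nl + 1) * (nl + 1) = nl by field; lra.
      lra.
    nra.
  have Htri : Rabs (f (x k t) + Gv g (x k t) - Fstar) <= (f (x k t) + Gv g (x k t) - Fstar - D) + Rabs D.
    have -> : f (x k t) + Gv g (x k t) - Fstar = (f (x k t) + Gv g (x k t) - Fstar - D) + D by ring.
    apply: Rle_trans (Rabs_triang _ _) _.
    rewrite (Rabs_pos_eq (f (x k t) + Gv g (x k t) - Fstar - D)); first lra.
    rewrite /D /r; lra.
  set Ph := f (x k t) + Gv g (x k t) - Fstar - D.
  have HPh : 0 <= Ph by rewrite /Ph /D /r; lra.
  have Hkey : eps / 2 <= Ph + / (2 * s) * nq r by rewrite /Ph /nq; lra.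
  have Hc2 : / (2 * s) = c * (rho / 2) by rewrite /c; field; lra.
  rewrite Hc2 in Hkey.
  have : Ph + c * (rho / 2) * nq r <= (1 + c) * (Ph + rho / 2 * nq r).
    have : 0 <= c * Ph by apply: Rmult_le_pos; lra.
    have : 0 <= rho / 2 * nq r by apply: Rmult_le_pos; lra.
    nra.
  move=> H1.
  apply: (Rmult_le_reg_l (1 + c)); first lra.
  have -> : (1 + c) * (eps / (2 * (1 + c))) = eps / 2 by field; lra.
  rewrite /Ph /D /r in H1 Hkey *. lra.
- move=> eps Heps.
  have Heta : 0 < rho / 2 * (eps * eps) by apply: Rmult_lt_0_compat; nra.
  apply: (PC _ _ Heta) => k t Hfin HE.
  have HPhi := Phi_ge0 Hopt Hfin.
  rewrite /Yv.
  have Hnr : 0 <= nq (resid A b (x k t)) by apply: dot_ge0.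
  have : eps * eps <= nq (resid A b (x k t)).
    rewrite /nq. move: HE. rewrite /norm => HE.
    rewrite -(sqrt_sqrt (dot (resid A b (x k t)) (resid A b (x k t)))); last exact: Hnr.
    apply: Rmult_le_compat; lra.
  move=> H. have : rho / 2 * (eps * eps) <= rho / 2 * nq (resid A b (x k t)).
    apply: Rmult_le_compat_l; lra.
  lra.
Qed.
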